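(* Let $\mathcal{C}=(\mathbf{C},\otimes,a,\mathcal{T})$ be a braided semigroupal category in which $\mathbf{C}$ is an additive category with pullbacks. Then the category $\mathbf{Lie}(\mathcal{C})$ of Lie objects has pullbacks. Specifically, given Lie morphisms $f\colon(A,\mu_A)\to(C,\mu_C)$ and $g\colon(B,\mu_B)\to(C,\mu_C)$, let $(A\times_CB,\pi_A,\pi_B)$ be their pullback in $\mathbf{C}$ and let $\mu_{A\times_CB}\colon(A\times_CB)\otimes(A\times_CB)\to A\times_CB$ be the unique morphism with $\pi_X\circ\mu_{A\times_CB}=\mu_X\circ(\pi_X\otimes\pi_X)$ for $X\in\{A,B\}$ (which exists). Then $((A\times_CB,\mu_{A\times_CB}),\pi_A,\pi_B)$ is a pullback of $f$ and $g$ in $\mathbf{Lie}(\mathcal{C})$.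
   Context: $a$ denotes the associativity natural isomorphism $a_{X,Y,Z}\colon(X\otimes Y)\otimes Z\to X\otimes(Y\otimes Z)$ and $\mathcal{T}_{X,Y}\colon X\otimes Y\to Y\otimes X$ the braiding natural isomorphism. A Lie object in $\mathcal{C}$ is a pair $(A,\mu)$ with $\mu\colon A\otimes A\to A$ such that $0=\mu\circ\mathcal{T}_{A,A}+\mu$ and $0=\mu\circ(\mathrm{Id}_A\otimes\mu)\circ a_{A,A,A}+\mu\circ(\mu\otimes\mathrm{Id}_A)\circ a^{-1}_{A,A,A}\circ(\mathrm{Id}_A\otimes\mathcal{T}_{A,A})\circ a_{A,A,A}-\mu\circ(\mu\otimes\mathrm{Id}_A)$. A Lie morphism $f\colon(A,\mu)\to(B,\eta)$ is a morphism $f\colon A\to B$ with $f\circ\mu=\eta\circ(f\otimes f)$. $\mathbf{Lie}(\mathcal{C})$ is the category of Lie objects and Lie morphisms. *)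

(* Defs.v *)
From Stdlib Require Import ProofIrrelevance.

Set Implicit Arguments.
Unset Strict Implicit.

Record Category := {
  Ob :> Type;
  Hom : Ob -> Ob -> Type;
  idm : forall X : Ob, Hom X X;
  comp : forall X Y Z : Ob, Hom Y Z -> Hom X Y -> Hom X Z;
  comp_idl : forall (X Y : Ob) (f : Hom X Y), comp (idm Y) f = f;
  comp_idr : forall (X Y : Ob) (f : Hom X Y), comp f (idm X) = f;
  comp_assoc : forall (W X Y Z : Ob) (h : Hom Y Z) (g : Hom X Y) (f : Hom W X),
      comp h (comp g f) = comp (comp h g) f
}.
Arguments Hom {C} X Y : rename.
Arguments idm {C} X : rename.
Arguments comp {C X Y Z} g f : rename.

Notation "g ∘ f" := (comp g f) (at level 40, left associativity).

Definition is_pullback (C : Category) (A B Z P : C)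
    (f : Hom A Z) (g : Hom B Z) (pA : Hom P A) (pB : Hom P B) : Prop :=
  f ∘ pA = g ∘ pB /\
  forall (D : C) (h : Hom D A) (k : Hom D B), f ∘ h = g ∘ k ->
    exists! u : Hom D P, pA ∘ u = h /\ pB ∘ u = k.

Definition has_pullbacks (C : Category) : Prop :=
  forall (A B Z : C) (f : Hom A Z) (g : Hom B Z),
    exists (P : C) (pA : Hom P A) (pB : Hom P B), is_pullback f g pA pB.

Record Preadditive (C : Category) := {
  hzero : forall X Y : C, Hom X Y;
  hadd : forall X Y : C, Hom X Y -> Hom X Y -> Hom X Y;
  hopp : forall X Y : C, Hom X Y -> Hom X Y;
  hadd_assoc : forall (X Y : C) (f g h : Hom X Y),
      hadd f (hadd g h) = hadd (hadd f g) h;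
  hadd_comm : forall (X Y : C) (f g : Hom X Y), hadd f g = hadd g f;
  hadd_0l : forall (X Y : C) (f : Hom X Y), hadd (hzero X Y) f = f;
  hadd_oppl : forall (X Y : C) (f : Hom X Y), hadd (hopp f) f = hzero X Y;
  comp_haddl : forall (X Y Z : C) (g g' : Hom Y Z) (f : Hom X Y),
      (hadd g g') ∘ f = hadd (g ∘ f) (g' ∘ f);
  comp_haddr : forall (X Y Z : C) (g : Hom Y Z) (f f' : Hom X Y),
      g ∘ (hadd f f') = hadd (g ∘ f) (g ∘ f')
}.
Arguments hzero {C} p X Y : rename.
Arguments hadd {C} p {X Y} f g : rename.
Arguments hopp {C} p {X Y} f : rename.

Definition is_zero_object (C : Category) (O : C) : Prop :=
  (forall X : C, exists! u : Hom O X, True) /\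
  (forall X : C, exists! u : Hom X O, True).

Definition is_biproduct (C : Category) (p : Preadditive C) (X Y S : C)
    (i1 : Hom X S) (i2 : Hom Y S) (p1 : Hom S X) (p2 : Hom S Y) : Prop :=
  p1 ∘ i1 = idm X /\ p2 ∘ i2 = idm Y /\
  p1 ∘ i2 = hzero p Y X /\ p2 ∘ i1 = hzero p X Y /\
  hadd p (i1 ∘ p1) (i2 ∘ p2) = idm S.

Record AdditiveCategory := {
  acat :> Category;
  apre : Preadditive acat;
  a_zero_object : exists O : acat, is_zero_object O;
  a_biproducts : forall X Y : acat, exists (S : acat) (i1 : Hom X S) (i2 : Hom Y S)
      (p1 : Hom S X) (p2 : Hom S Y), is_biproduct apre i1 i2 p1 p2
}.

Record BraidedSemigroupal (C : Category) := {
  tob : C -> C -> C;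
  thom : forall (X X' Y Y' : C), Hom X X' -> Hom Y Y' -> Hom (tob X Y) (tob X' Y');
  thom_id : forall X Y : C, thom (idm X) (idm Y) = idm (tob X Y);
  thom_comp : forall (X X' X'' Y Y' Y'' : C) (f' : Hom X' X'') (f : Hom X X')
      (g' : Hom Y' Y'') (g : Hom Y Y'),
      thom (f' ∘ f) (g' ∘ g) = thom f' g' ∘ thom f g;
  assoc : forall X Y Z : C, Hom (tob (tob X Y) Z) (tob X (tob Y Z));
  assoc_inv : forall X Y Z : C, Hom (tob X (tob Y Z)) (tob (tob X Y) Z);
  assoc_invK : forall X Y Z : C, assoc_inv X Y Z ∘ assoc X Y Z = idm _;
  assocK_inv : forall X Y Z : C, assoc X Y Z ∘ assoc_inv X Y Z = idm _;
  assoc_nat : forall (X X' Y Y' Z Z' : C) (f : Hom X X') (g : Hom Y Y') (h : Hom Z Z'),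
      assoc X' Y' Z' ∘ thom (thom f g) h = thom f (thom g h) ∘ assoc X Y Z;
  pentagon : forall W X Y Z : C,
      assoc W X (tob Y Z) ∘ assoc (tob W X) Y Z =
      thom (idm W) (assoc X Y Z) ∘ assoc W (tob X Y) Z ∘ thom (assoc W X Y) (idm Z);
  braid : forall X Y : C, Hom (tob X Y) (tob Y X);
  braid_inv : forall X Y : C, Hom (tob Y X) (tob X Y);
  braid_invK : forall X Y : C, braid_inv X Y ∘ braid X Y = idm _;
  braidK_inv : forall X Y : C, braid X Y ∘ braid_inv X Y = idm _;
  braid_nat : forall (X X' Y Y' : C) (f : Hom X X') (g : Hom Y Y'),
      braid X' Y' ∘ thom f g = thom g f ∘ braid X Y;
  hexagon1 : forall X Y Z : C,
      assoc Y Z X ∘ braid X (tob Y Z) ∘ assoc X Y Z =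
      thom (idm Y) (braid X Z) ∘ assoc Y X Z ∘ thom (braid X Y) (idm Z);
  hexagon2 : forall X Y Z : C,
      assoc_inv Z X Y ∘ braid (tob X Y) Z ∘ assoc_inv X Y Z =
      thom (braid X Z) (idm Y) ∘ assoc_inv X Z Y ∘ thom (idm X) (braid Y Z)
}.
Arguments tob {C} M X Y : rename.
Arguments thom {C} M {X X' Y Y'} f g : rename.
Arguments assoc {C} M X Y Z : rename.
Arguments assoc_inv {C} M X Y Z : rename.
Arguments braid {C} M X Y : rename.

Section Lie.
Variables (C : AdditiveCategory) (M : BraidedSemigroupal C).

Local Notation "X ⊗ Y" := (tob M X Y) (at level 30).
Local Notation "f ⊗h g" := (thom M f g) (at level 30).
Local Notation "0" := (hzero (apre C) _ _).
Local Notation "f + g" := (hadd (apre C) f g).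
Local Notation "f - g" := (hadd (apre C) f (hopp (apre C) g)).

Definition is_Lie (A : C) (mu : Hom (A ⊗ A) A) : Prop :=
  0 = mu ∘ braid M A A + mu /\
  0 = mu ∘ (idm A ⊗h mu) ∘ assoc M A A A
      + mu ∘ (mu ⊗h idm A) ∘ assoc_inv M A A A ∘ (idm A ⊗h braid M A A) ∘ assoc M A A A
      - mu ∘ (mu ⊗h idm A).

Definition is_Lie_morphism (A B : C) (muA : Hom (A ⊗ A) A) (muB : Hom (B ⊗ B) B)
    (f : Hom A B) : Prop :=
  f ∘ muA = muB ∘ (f ⊗h f).

Record LieObj := mkLieObj {
  lob : C;
  lmu : Hom (lob ⊗ lob) lob;
  lie_ax : is_Lie lmu
}.

Definition LieHom (A B : LieObj) : Type :=
  { f : Hom (lob A) (lob B) | is_Lie_morphism (lmu A) (lmu B) f }.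

Lemma Lie_id_mor (A : LieObj) : is_Lie_morphism (lmu A) (lmu A) (idm (lob A)).
Proof.
  unfold is_Lie_morphism. rewrite thom_id, comp_idl, comp_idr. reflexivity.
Qed.

Lemma Lie_comp_mor (A B D : LieObj) (g : LieHom B D) (f : LieHom A B) :
  is_Lie_morphism (lmu A) (lmu D) (proj1_sig g ∘ proj1_sig f).
Proof.
  destruct g as [g Hg], f as [f Hf]; unfold is_Lie_morphism in *; simpl.
  rewrite <- comp_assoc, Hf, comp_assoc, Hg, <- comp_assoc, <- thom_comp.
  reflexivity.
Qed.

Definition Lie_idm (A : LieObj) : LieHom A A := exist _ _ (Lie_id_mor A).
Definition Lie_comp (A B D : LieObj) (g : LieHom B D) (f : LieHom A B) : LieHom A D :=
  exist _ _ (Lie_comp_mor g f).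

Lemma LieHom_eq (A B : LieObj) (f g : LieHom A B) :
  proj1_sig f = proj1_sig g -> f = g.
Proof.
  destruct f as [f Hf], g as [g Hg]; simpl; intros ->.
  f_equal; apply proof_irrelevance.
Qed.

Definition LieCat : Category.
Proof.
  refine {| Ob := LieObj; Hom := LieHom; idm := Lie_idm; comp := Lie_comp |}.
  - intros X Y f; apply LieHom_eq; simpl; apply comp_idl.
  - intros X Y f; apply LieHom_eq; simpl; apply comp_idr.
  - intros W X Y Z h g f; apply LieHom_eq; simpl; apply comp_assoc.
Defined.

End Lie.
Arguments mkLieObj {C M} lob lmu lie_ax.
Arguments lob {C M} l.
Arguments lmu {C M} l.

(* Main.v *)
Require Import Defs.

Ltac rassoc := repeat rewrite <- comp_assoc.

Lemma add_idem (C : Category) (pr : Preadditive C) (X Y : C) (x : Hom X Y) :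
  x = hadd pr x x -> x = hzero pr X Y.
Proof.
  intro H. rewrite <- (hadd_oppl pr x).
  transitivity (hadd pr (hopp pr x) (hadd pr x x)).
  - rewrite hadd_assoc, hadd_oppl, hadd_0l. reflexivity.
  - rewrite <- H. reflexivity.
Qed.

Lemma inv_unique (C : Category) (pr : Preadditive C) (X Y : C) (a b : Hom X Y) :
  hadd pr a b = hzero pr X Y -> a = hopp pr b.
Proof.
  intro H. rewrite <- (hadd_0l pr a), <- (hadd_oppl pr b), <- hadd_assoc,
    (hadd_comm pr b a), H, hadd_comm, hadd_0l. reflexivity.
Qed.

Lemma additive_0 (C : Category) (pr : Preadditive C) (X Y X' Y' : C)
  (F : Hom X Y -> Hom X' Y') (HF : forall a b, F (hadd pr a b) = hadd pr (F a) (F b)) :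
  F (hzero pr X Y) = hzero pr X' Y'.
Proof.
  apply add_idem. rewrite <- HF, hadd_0l. reflexivity.
Qed.

Lemma additive_opp (C : Category) (pr : Preadditive C) (X Y X' Y' : C)
  (F : Hom X Y -> Hom X' Y') (HF : forall a b, F (hadd pr a b) = hadd pr (F a) (F b)) a :
  F (hopp pr a) = hopp pr (F a).
Proof.
  apply inv_unique. rewrite <- HF, hadd_oppl. exact (@additive_0 _ _ _ _ _ _ F HF).
Qed.

Lemma comp_0r (C : Category) (pr : Preadditive C) (X Y Z : C) (g : Hom Y Z) :
  g ∘ hzero pr X Y = hzero pr X Z.
Proof. apply (@additive_0 _ pr _ _ _ _ (fun x => g ∘ x)). intros; apply comp_haddr. Qed.
Lemma comp_0l (C : Category) (pr : Preadditive C) (X Y Z : C) (f : Hom X Y) :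
  hzero pr Y Z ∘ f = hzero pr X Z.
Proof. apply (@additive_0 _ pr _ _ _ _ (fun x => x ∘ f)). intros; apply comp_haddl. Qed.
Lemma comp_oppr (C : Category) (pr : Preadditive C) (X Y Z : C) (g : Hom Y Z) (f : Hom X Y) :
  g ∘ hopp pr f = hopp pr (g ∘ f).
Proof. apply (@additive_opp _ pr _ _ _ _ (fun x => g ∘ x)). intros; apply comp_haddr. Qed.
Lemma comp_oppl (C : Category) (pr : Preadditive C) (X Y Z : C) (g : Hom Y Z) (f : Hom X Y) :
  hopp pr g ∘ f = hopp pr (g ∘ f).
Proof. apply (@additive_opp _ pr _ _ _ _ (fun x => x ∘ f)). intros; apply comp_haddl. Qed.

Lemma ainv_nat (C : Category) (M : BraidedSemigroupal C) (X X' Y Y' Z Z' : C)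
  (f : Hom X X') (g : Hom Y Y') (h : Hom Z Z') :
  assoc_inv M X' Y' Z' ∘ thom M f (thom M g h) = thom M (thom M f g) h ∘ assoc_inv M X Y Z.
Proof.
  rewrite <- (comp_idr (assoc_inv M X' Y' Z' ∘ thom M f (thom M g h))).
  rewrite <- (assocK_inv M X Y Z). rewrite !comp_assoc.
  rewrite <- (comp_assoc (assoc_inv M X' Y' Z')), <- assoc_nat.
  rewrite !comp_assoc, assoc_invK, comp_idl. reflexivity.
Qed.

Lemma thom_r (C : Category) (M : BraidedSemigroupal C) (X X' Y Y' W: C)
  (f : Hom X X') (g : Hom Y Y') (k : Hom W _) :
  thom M f g ∘ k = thom M f (idm _) ∘ (thom M (idm _) g ∘ k).
Proof. rewrite comp_assoc, <- thom_comp, comp_idl, comp_idr. reflexivity. Qed.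

Definition SymE (C : AdditiveCategory) (M : BraidedSemigroupal C) (X : C)
  (mu : Hom (tob M X X) X) : Hom (tob M X X) X :=
  hadd (apre C) (mu ∘ braid M X X) mu.
Definition JacE (C : AdditiveCategory) (M : BraidedSemigroupal C) (X : C)
  (mu : Hom (tob M X X) X) : Hom (tob M (tob M X X) X) X :=
  hadd (apre C) (hadd (apre C) (mu ∘ thom M (idm X) mu ∘ assoc M X X X)
     (mu ∘ thom M mu (idm X) ∘ assoc_inv M X X X ∘ thom M (idm X) (braid M X X) ∘ assoc M X X X))
     (hopp (apre C) (mu ∘ thom M mu (idm X))).

Arguments SymE {C M X} mu.
Arguments JacE {C M X} mu.

Lemma is_Lie_iff (C : AdditiveCategory) (M : BraidedSemigroupal C) (X : C)
  (mu : Hom (tob M X X) X) :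
  is_Lie (M:=M) mu <-> (hzero (apre C) _ _ = SymE mu /\ hzero (apre C) _ _ = JacE mu).
Proof. unfold is_Lie, SymE, JacE. tauto. Qed.

Lemma sym_transfer (C : AdditiveCategory) (M : BraidedSemigroupal C) (X Y : C)
  (muX : Hom (tob M X X) X) (muY : Hom (tob M Y Y) Y) (p : Hom X Y)
  (Hp : p ∘ muX = muY ∘ thom M p p) :
  p ∘ SymE muX = SymE muY ∘ thom M p p.
Proof.
  unfold SymE. rewrite comp_haddr, comp_haddl, Hp. f_equal.
  rewrite comp_assoc, Hp. rewrite <- !comp_assoc, braid_nat. reflexivity.
Qed.

Lemma jac_transfer (C : AdditiveCategory) (M : BraidedSemigroupal C) (X Y : C)
  (muX : Hom (tob M X X) X) (muY : Hom (tob M Y Y) Y) (p : Hom X Y)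
  (Hp : p ∘ muX = muY ∘ thom M p p) :
  p ∘ JacE muX = JacE muY ∘ thom M (thom M p p) p.
Proof.
  unfold JacE. rewrite !comp_haddr, !comp_haddl, comp_oppr, comp_oppl.
  assert (H3 : p ∘ (muX ∘ thom M muX (idm X)) = muY ∘ thom M muY (idm Y) ∘ thom M (thom M p p) p).
  { rewrite comp_assoc, Hp, <- !comp_assoc, <- !thom_comp, Hp, !comp_idl, !comp_idr. reflexivity. }
  rewrite H3. f_equal. f_equal.
  - rewrite !comp_assoc, Hp. rewrite <- (comp_assoc muY (thom M p p)), <- thom_comp, comp_idr, Hp.
    rewrite <- (comp_assoc (muY ∘ thom M (idm Y) muY)), assoc_nat, comp_assoc.
    rewrite <- (comp_assoc muY (thom M (idm Y) muY)), <- thom_comp, comp_idl. reflexivity.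
  - rewrite <- !comp_assoc.
    transitivity (muY ∘ (thom M (muY ∘ thom M p p) p ∘ (assoc_inv M X X X ∘ (thom M (idm X) (braid M X X) ∘ assoc M X X X)))).
    + rewrite (comp_assoc p muX), Hp, <- (comp_assoc muY (thom M p p)),
        (comp_assoc (thom M p p) (thom M muX (idm X))), <- thom_comp, Hp, comp_idr.
      reflexivity.
    + rewrite assoc_nat, (comp_assoc (thom M (idm Y) (braid M Y Y))), <- thom_comp, comp_idl, braid_nat.
      assert (E : thom M p (thom M p p ∘ braid M X X) = thom M p (thom M p p) ∘ thom M (idm X) (braid M X X)).
      { rewrite <- thom_comp, comp_idr. reflexivity. }
      rewrite E. rewrite <- (comp_assoc (thom M p (thom M p p))).
      rewrite (comp_assoc (assoc_inv M Y Y Y)), ainv_nat, <- comp_assoc.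
      rewrite (comp_assoc (thom M muY (idm Y))), <- thom_comp, comp_idl. reflexivity.
Qed.

Lemma pb_monic (C : Category) (A B Z P : C) (f : Hom A Z) (g : Hom B Z)
  (pA : Hom P A) (pB : Hom P B) (H : is_pullback f g pA pB) (D : C) (u v : Hom D P) :
  pA ∘ u = pA ∘ v -> pB ∘ u = pB ∘ v -> u = v.
Proof.
  intros E1 E2. destruct H as [Hc Hu].
  destruct (Hu D (pA ∘ v) (pB ∘ v)) as [w [_ Hw]].
  { rewrite !comp_assoc, Hc. reflexivity. }
  rewrite <- (Hw u), (Hw v); auto.
Qed.

Arguments is_Lie_iff {C M X} mu.
Arguments sym_transfer {C M X Y muX muY p} Hp.
Arguments jac_transfer {C M X Y muX muY p} Hp.
Arguments pb_monic {C A B Z P f g pA pB} H {D u v}.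

Theorem mainTheorem7 (C : AdditiveCategory) (M : BraidedSemigroupal C)
  (HC : has_pullbacks C)
  (A B Z : LieObj M) (f : @Hom (LieCat M) A Z) (g : @Hom (LieCat M) B Z)
  (P : C) (pA : Hom P (lob A)) (pB : Hom P (lob B))
  (Hpb : is_pullback (proj1_sig f) (proj1_sig g) pA pB) :
  (exists muP : Hom (tob M P P) P,
      pA ∘ muP = lmu A ∘ thom M pA pA /\ pB ∘ muP = lmu B ∘ thom M pB pB) /\
  (forall muP : Hom (tob M P P) P,
      pA ∘ muP = lmu A ∘ thom M pA pA -> pB ∘ muP = lmu B ∘ thom M pB pB ->
      exists (HL : is_Lie (M:=M) muP)
             (HA : is_Lie_morphism (M:=M) muP (lmu A) pA)
             (HB : is_Lie_morphism (M:=M) muP (lmu B) pB),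
        @is_pullback (LieCat M) A B Z (mkLieObj P muP HL) f g
          (exist _ pA HA : @Hom (LieCat M) (mkLieObj P muP HL) A)
          (exist _ pB HB : @Hom (LieCat M) (mkLieObj P muP HL) B)).
Proof.
  split.
  - pose proof Hpb as [Hc Hu].
    destruct f as [f Hf], g as [g Hg]; simpl in *. unfold is_Lie_morphism in *.
    destruct (Hu _ (lmu A ∘ thom M pA pA) (lmu B ∘ thom M pB pB)) as [mu [[H1 H2] _]].
    { rewrite !comp_assoc, Hf, Hg, <- !comp_assoc, <- !thom_comp, Hc. reflexivity. }
    exists mu. auto.
  - intros muP HA HB.
    assert (HL : is_Lie (M:=M) muP).
    { apply is_Lie_iff.
      pose proof (proj1 (is_Lie_iff _) (lie_ax A)) as [SA JA].
      pose proof (proj1 (is_Lie_iff _) (lie_ax B)) as [SB JB].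
      split; apply (pb_monic Hpb).
      - rewrite comp_0r, (sym_transfer HA), <- SA, comp_0l. reflexivity.
      - rewrite comp_0r, (sym_transfer HB), <- SB, comp_0l. reflexivity.
      - rewrite comp_0r, (jac_transfer HA), <- JA, comp_0l. reflexivity.
      - rewrite comp_0r, (jac_transfer HB), <- JB, comp_0l. reflexivity. }
    exists HL, HA, HB. split.
    + apply LieHom_eq. simpl. exact (proj1 Hpb).
    + intros D h k Hhk.
      pose proof (f_equal (@proj1_sig _ _) Hhk) as Hhk'. simpl in Hhk'.
      pose proof Hpb as [Hc Hu].
      destruct (Hu _ (proj1_sig h) (proj1_sig k) Hhk') as [u [[Hu1 Hu2] Huniq]].
      assert (Hmor : is_Lie_morphism (M:=M) (lmu D) muP u).
      { unfold is_Lie_morphism. destruct h as [h Hh], k as [k Hk]. simpl in *.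
        unfold is_Lie_morphism in *.
        apply (pb_monic Hpb).
        - rewrite comp_assoc, Hu1, Hh, comp_assoc, HA, <- comp_assoc, <- thom_comp, Hu1.
          reflexivity.
        - rewrite comp_assoc, Hu2, Hk, comp_assoc, HB, <- comp_assoc, <- thom_comp, Hu2.
          reflexivity. }
      exists (exist _ u Hmor). split.
      * split; apply LieHom_eq; simpl; assumption.
      * intros u' [E1 E2]. apply LieHom_eq. simpl. apply Huniq. split.
        -- exact (f_equal (@proj1_sig _ _) E1).
        -- exact (f_equal (@proj1_sig _ _) E2).
Qed.
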